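(* For every integer $r\ge 0$, $\mathrm{LCD}[6r+5,2] < 4r+3$.
   Context: All codes are binary linear codes, i.e. subspaces of $\mathbb{F}_2^n$; an $[n,k,d]$ code is one of length $n$, dimension $k$ and minimum Hamming distance $d$. A linear code $C$ is an LCD code if $C\cap C^\perp=\{0\}$, where $C^\perp$ is the dual with respect to the standard dot product. For positive integers $n\ge k$, $\mathrm{LCD}[n,k]$ denotes the largest $d$ such that there exists a binary $[n,k,d]$ LCD code. *)

(* Defs.v *)
From mathcomp Require Import all_boot all_order all_algebra.
Set Implicit Arguments. Unset Strict Implicit. Unset Printing Implicit Defensive.
Import GRing.Theory.
Local Open Scope ring_scope.

(* A binary linear code of length n is represented by a square matrix
   A : 'M['F_2]_n whose row space (in the sense of mxalgebra) is the code.
   Codewords are the row vectors u with (u <= A)%MS; the dimension is \rank A. *)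

Definition wt n (u : 'rV['F_2]_n) : nat := #|[set j : 'I_n | u 0 j != 0]|.

Definition dual_code n (A : 'M['F_2]_n) : 'M['F_2]_n := kermx A^T.

Definition is_LCD n (A : 'M['F_2]_n) : bool := ((A :&: dual_code A)%MS == (0 : 'M['F_2]_n))%MS.

Definition min_dist n (A : 'M['F_2]_n) : nat :=
  \big[maxn/0%N]_(d < n.+1 | [forall u : 'rV['F_2]_n,
       ((u <= A)%MS && (u != 0)) ==> (d <= wt u)%N]) (d : nat).

Definition LCDmax (n k : nat) : nat :=
  \big[maxn/0%N]_(A : 'M['F_2]_n | (\rank A == k)%N && is_LCD A) min_dist A.

(* Main.v *)
Require Import Defs.
From mathcomp Require Import all_boot all_order all_algebra.
Set Implicit Arguments. Unset Strict Implicit.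
Import GRing.Theory.
Local Open Scope ring_scope.

Lemma F2_cases (x : 'F_2) : (x == 0) || (x == 1).
Proof. by case: x => -[|[|m]]. Qed.
Lemma F2_cases' (x : 'F_2) : x = 0 \/ x = 1.
Proof. by case/orP: (F2_cases x) => /eqP; [left|right]. Qed.
Lemma F2mul (x y : 'F_2) : x * y = ((x != 0) && (y != 0))%:R.
Proof. case: (F2_cases' x) => ->; case: (F2_cases' y) => ->; apply/eqP; reflexivity. Qed.
Lemma F2add (x y : 'F_2) : (x + y != 0) = (x != 0) (+) (y != 0).
Proof. case: (F2_cases' x) => ->; case: (F2_cases' y) => ->; reflexivity. Qed.
Lemma two0 : (2%:R : 'F_2) = 0. Proof. apply/eqP; reflexivity. Qed.

Definition ip n (x y : 'rV['F_2]_n) : nat := (\sum_(j < n) ((x 0%R j != 0%R) && (y 0%R j != 0%R)))%N.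

Lemma wtE n (x : 'rV['F_2]_n) : wt x = (\sum_(j < n) (x 0%R j != 0%R))%N.
Proof.
rewrite /wt -sum1_card big_mkcond /=; apply: eq_bigr => j _.
by rewrite inE; case: (_ != _).
Qed.

Lemma dot0 n (x y : 'rV['F_2]_n) : ~~ odd (ip x y) -> x *m y^T = 0.
Proof.
move=> He; apply/matrixP => i j; rewrite !ord1 !mxE.
under eq_bigr => k _ do rewrite !mxE F2mul.
rewrite -natr_sum -/(ip x y) -[ip x y]odd_double_half (negbTE He) add0n.
by rewrite -muln2 natrM two0 mulr0.
Qed.

Section Count.
Variables (n : nat) (u v : 'rV['F_2]_n).
Let p j := u 0 j != 0.
Let q j := v 0 j != 0.
Let a := (\sum_(j < n) (p j && ~~ q j))%N.
Let b := (\sum_(j < n) (~~ p j && q j))%N.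
Let c := (\sum_(j < n) (p j && q j))%N.

Lemma wt_u : wt u = (a + c)%N.
Proof. rewrite wtE /a /c -big_split; apply: eq_bigr => j _; rewrite /p /q. by case: (_ != 0); case: (_ != 0). Qed.
Lemma wt_v : wt v = (b + c)%N.
Proof. rewrite wtE /b /c -big_split; apply: eq_bigr => j _; rewrite /p /q. by case: (_ != 0); case: (_ != 0). Qed.
Lemma wt_uv : wt (u + v) = (a + b)%N.
Proof. rewrite wtE /a /b -big_split; apply: eq_bigr => j _; rewrite /p /q mxE F2add. by case: (_ != 0); case: (_ != 0). Qed.
Lemma abc_le : (a + b + c <= n)%N.
Proof.
rewrite /a /b /c -!big_split /=.
apply: leq_trans (_ : (\sum_(j < n) 1 <= n)%N).
  by apply: leq_sum => j _; case: (p j); case: (q j).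
by rewrite sum1_card card_ord.
Qed.
Lemma ip_uu : ip u u = (a + c)%N.
Proof. rewrite /ip /a /c -big_split; apply: eq_bigr => j _; rewrite -/(p j). by case: (p j); case: (q j). Qed.
Lemma ip_vv : ip v v = (b + c)%N.
Proof. rewrite /ip /b /c -big_split; apply: eq_bigr => j _; rewrite -/(q j). by case: (p j); case: (q j). Qed.
Lemma ip_uv : ip u v = c.
Proof. by []. Qed.
Lemma ip_vu : ip v u = c.
Proof. rewrite /ip /c; apply: eq_bigr => j _; rewrite -/(p j) -/(q j). by case: (p j); case: (q j). Qed.
Lemma ip_uvu : ip (u + v) u = a.
Proof. rewrite /ip /a; apply: eq_bigr => j _; rewrite mxE F2add -/(p j) -/(q j). by case: (p j); case: (q j). Qed.
Lemma ip_uvv : ip (u + v) v = b.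
Proof. rewrite /ip /b; apply: eq_bigr => j _; rewrite mxE F2add -/(p j) -/(q j). by case: (p j); case: (q j). Qed.
End Count.

From mathcomp Require Import zify.

Lemma key n (u v : 'rV['F_2]_n) r : n = (6*r+5)%N ->
  (4*r+3 <= wt u)%N -> (4*r+3 <= wt v)%N -> (4*r+3 <= wt (u+v))%N ->
  [|| ~~ odd (ip u u) && ~~ odd (ip u v),
      ~~ odd (ip v u) && ~~ odd (ip v v) |
      ~~ odd (ip (u+v) u) && ~~ odd (ip (u+v) v)].
Proof.
move=> En; rewrite (wt_u u v) (wt_v u v) (wt_uv u v) (ip_uu u v) (ip_uv u v) (ip_vu u v) (ip_vv u v) (ip_uvu u v) (ip_uvv u v) => H1 H2 H3.
have H4 := abc_le u v.
move: H1 H2 H3 H4 => /=.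
move: (\sum_(j < n) _ && ~~ _)%N (\sum_(j < n) ~~ _ && _)%N (\sum_(j < n) (_ && _))%N => a b c H1 H2 H3 H4.
have ev : forall m k, m = (2*k)%N -> ~~ odd m by move=> m k ->; rewrite oddM.
have [[Ha [Hb Hc]]|[[Ha [Hb Hc]]|[Ha [Hb Hc]]]] :
  (c = 2*r+1 /\ a = 2*r+2 /\ b = 2*r+2)%N \/ (a = 2*r+1 /\ c = 2*r+2 /\ b = 2*r+2)%N
  \/ (b = 2*r+1 /\ c = 2*r+2 /\ a = 2*r+2)%N by lia.
- apply/or3P; apply: Or32; apply/andP; split; [apply: (ev _ (r+1)) | apply: (ev _ (2*r+2))]; lia.
- apply/or3P; apply: Or31; apply/andP; split; [apply: (ev _ (2*r+2)) | apply: (ev _ (r+1))]; lia.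
- apply/or3P; apply: Or33; apply/andP; split; apply: (ev _ (r+1)); lia.
Qed.

Lemma orth_w n (A : 'M['F_2]_n) (u v w : 'rV['F_2]_n) : (w <= A)%MS -> w != 0 ->
  (A <= col_mx u v)%MS -> w *m u^T = 0 -> w *m v^T = 0 -> ~~ is_LCD A.
Proof.
move=> wA w0 /submxP[D eA] wu wv.
have wAT : w *m A^T = 0.
  by rewrite eA trmx_mul mulmxA tr_col_mx mul_mx_row wu wv row_mx0 mul0mx.
apply/negP; rewrite /is_LCD => /andP[H _].
have : (w <= A :&: dual_code A)%MS by rewrite sub_capmx wA /dual_code sub_kermx wAT eqxx.
by move=> /submx_trans/(_ H); rewrite submx0 (negbTE w0).
Qed.

Theorem proposition2p5 (r : nat) : (LCDmax (6 * r + 5) 2 < 4 * r + 3)%N.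
Proof.
suff H : (LCDmax (6 * r + 5) 2 <= 4 * r + 2)%N by lia.
apply/bigmax_leqP => A /andP[/eqP rkA lcd].
apply/bigmax_leqP => d /forallP Hd.
rewrite leqNgt; apply/negP => dgt.
have Hw : forall x : 'rV['F_2]_(6*r+5), (x <= A)%MS -> x != 0 -> (4*r+3 <= wt x)%N.
  move=> x xA x0; have := Hd x; rewrite xA x0 /= => ?; lia.
have A0 : A != 0 by apply/eqP => eA; move: rkA; rewrite eA mxrank0.
case/rowV0Pn: A0 => u uA u0.
have : ~~ (A <= u)%MS by apply/negP => /mxrankS; rewrite rkA rank_rV u0.
case/row_subPn => i viu; set v := row i A in viu.
have vA : (v <= A)%MS := row_sub i A.
have v0 : v != 0 by apply: contraNneq viu => ->; rewrite sub0mx.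
have uv0 : u + v != 0.
  apply: contraNneq viu => /eqP; rewrite addrC addr_eq0 => /eqP ->.
  by rewrite eqmx_opp submx_refl.
have uvA : ((u + v)%R <= A)%MS := addmx_sub uA vA.
have cA : (col_mx u v <= A)%MS by rewrite col_mx_sub uA vA.
have Acv : (A <= col_mx u v)%MS.
  rewrite -(geq_leqif (mxrank_leqif_sup cA)) rkA.
  have uc : (u <= col_mx u v)%MS by rewrite -addsmxE addsmxSl.
  have : (\rank u < \rank (col_mx u v))%N.
    rewrite (ltn_leqif (mxrank_leqif_sup uc)).
    apply: contra viu => /(submx_trans _); apply.
    by rewrite -addsmxE addsmxSr.
  by rewrite rank_rV u0.
have := key (erefl _) (Hw _ uA u0) (Hw _ vA v0) (Hw _ uvA uv0).
case/or3P => /andP[e1 e2]; move: lcd; apply/negP.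
- by apply: (orth_w uA u0 Acv); apply: dot0.
- by apply: (orth_w vA v0 Acv); apply: dot0.
- by apply: (orth_w uvA uv0 Acv); apply: dot0.
Qed.
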